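(* Let $A,B\in\mathrm{SL}_2\mathbb{R}$ be noncommuting, with trace $\ge 2$, coherently oriented, and let $B$ be hyperbolic. (1) Suppose $A$ is hyperbolic as well and the translation axes of $A$ and $B$ are asymptotically parallel (distinct but sharing an ideal endpoint). Then: (1.1) if $[a]\ne[b]$, the only optimal word is the one among $a$ and $b$ corresponding to the matrix with larger trace; (1.2) if $[a]=[b]$ and $I^+\cap I^-=\emptyset$, then every word is maximal, so that every Lyndon word is optimal (the complete set of optimal words is the set of all Lyndon words); if instead $[a]=[b]$ and $I^+\cap I^-\neq\emptyset$ (necessarily a singleton), then $a$ and $b$ are both optimal and there are no other optimal words. (2) If $A$ is parabolic with fixed point $\alpha^+=\alpha^-\in\{\beta^+,\beta^-\}$, then $b$ is the only optimal word.
   Context: Hyperbolic means trace $>2$, with attracting/repelling fixed points $\alpha^\pm$ (for $A$), $\beta^\pm$ (for $B$) in $\partial\mathcal{H}=\mathbb{P}^1\mathbb{R}$; a parabolic matrix (trace $2$, $\neq I$) has a unique fixed point, denoted $\alpha^+=\alpha^-$. The translation axis of a hyperbolic matrix is the geodesic joining its fixed points. Coherent orientation: with $\partial\mathcal{H}$ cyclically ordered and $[\alpha,\beta]$ the closed counterclockwise interval from $\alpha$ to $\beta$, let $I^+=\{\alpha^+\}$ if $\alpha^+=\beta^+$, and otherwise the one of $[\alpha^+,\beta^+],[\beta^+,\alpha^+]$ mapped into itself by both $A$ and $B$ (if it exists); define $I^-$ likewise with $A^{-1},B^{-1},\alpha^-,\beta^-$; the pair is coherently oriented if both exist. Words: $F_2^+$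 is the free semigroup of nonempty words over $\{a,b\}$, $|w|$ the length, $\phi(a)=A,\phi(b)=B$ extended to a homomorphism, $[w]=\mathrm{tr}(\phi(w))$. Define $w\preceq u$ iff $[w^{|u|}]\le[u^{|w|}]$; $w$ is maximal if $u\preceq w$ for all $u$. A Lyndon word is one strictly smaller lexicographically ($a<b$) than each of its proper rotations. A complete set of optimal words is a set of pairwise distinct maximal Lyndon words such that every maximal word is a power of a rotation of one of them; it is unique if it exists, and its elements are the optimal words. *)

(* Defs.v *)
From HB Require Import structures.
From mathcomp Require Import all_boot all_order all_algebra.
Set Implicit Arguments. Unset Strict Implicit. Unset Printing Implicit Defensive.
Import Order.TTheory GRing.Theory Num.Theory.
Local Open Scope ring_scope.

Inductive P1 (R : Type) := Fin of R | Inf.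
Arguments Inf {R}.

Section Geometry.
Variable R : realFieldType.

Definition proj (v : 'cV[R]_2) : P1 R :=
  if v 1 0 == 0 then Inf else Fin (v 0 0 / v 1 0).

Definition mob (A : 'M[R]_2) (p : P1 R) : P1 R :=
  match p with
  | Fin x => let den := A 1 0 * x + A 1 1 in
             if den == 0 then Inf else Fin ((A 0 0 * x + A 0 1) / den)
  | Inf => if A 1 0 == 0 then Inf else Fin (A 0 0 / A 1 0)
  end.

Definition SL2 (A : 'M[R]_2) : Prop := \det A = 1.
Definition hyperbolic (A : 'M[R]_2) : Prop := 2 < \tr A.
Definition parabolic (A : 'M[R]_2) : Prop := \tr A = 2 /\ A <> 1%:M.

(* attracting fixed point alpha^+: eigenline of an eigenvalue of modulus >= 1;
   repelling fixed point alpha^-: eigenline of an eigenvalue of modulus <= 1.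
   For hyperbolic A these are the usual attracting / repelling fixed points,
   for parabolic A both are the unique fixed point. *)
Definition attr_fp (A : 'M[R]_2) (p : P1 R) : Prop :=
  exists (v : 'cV[R]_2) (l : R), v <> 0 /\ A *m v = l *: v /\ 1 <= `|l| /\ p = proj v.
Definition rep_fp (A : 'M[R]_2) (p : P1 R) : Prop :=
  exists (v : 'cV[R]_2) (l : R), v <> 0 /\ A *m v = l *: v /\ `|l| <= 1 /\ p = proj v.

(* cyclic order: R increasing, then oo (counterclockwise boundary of H).
   key order: Fin x < Inf. *)
Definition p1le (p q : P1 R) : bool :=
  match p, q with
  | Fin x, Fin y => x <= y
  | _, Inf => true
  | Inf, Fin _ => false
  end.
Definition p1lt (p q : P1 R) : bool := ~~ p1le q p.

Definition p1eq (p q : P1 R) : bool := p1le p q && p1le q p.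

(* closed counterclockwise interval [p, q] *)
Definition arc (p q : P1 R) (x : P1 R) : bool :=
  if p1le p q then p1le p x && p1le x q else p1le p x || p1le x q.

Definition invariant (A : 'M[R]_2) (S : P1 R -> bool) : Prop :=
  forall x, S x -> S (mob A x).

Definition is_I (A B : 'M[R]_2) (p q : P1 R) (S : P1 R -> bool) : Prop :=
  (p = q /\ (forall x, S x = p1eq x p))
  \/ (p <> q /\ ((forall x, S x = arc p q x) \/ (forall x, S x = arc q p x))
             /\ invariant A S /\ invariant B S).

Definition is_Iplus (A B : 'M[R]_2) (ap bp : P1 R) S := is_I A B ap bp S.
Definition is_Iminus (A B : 'M[R]_2) (am bm : P1 R) S :=
  is_I (invmx A) (invmx B) am bm S.

End Geometry.

(* letters: false = a, true = b  (so that a < b as booleans) *)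
Definition la : bool := false.
Definition lb : bool := true.

Definition wpow (w : seq bool) (k : nat) : seq bool := flatten (nseq k w).

Fixpoint lexlt (s t : seq bool) : bool :=
  match s, t with
  | [::], [::] => false
  | [::], _ :: _ => true
  | _ :: _, [::] => false
  | x :: s', y :: t' => (~~ x && y) || ((x == y) && lexlt s' t')
  end.

Definition lyndon (w : seq bool) : Prop :=
  w <> [::] /\ forall k, (0 < k < size w)%N -> lexlt w (rot k w).

Section Words.
Variable R : realFieldType.
Variables A B : 'M[R]_2.

Definition phi (w : seq bool) : 'M[R]_2 :=
  foldr (fun c M => (if c then B else A) *m M) 1%:M w.

Definition wtr (w : seq bool) : R := \tr (phi w).

Definition wle (w u : seq bool) : Prop :=
  wtr (wpow w (size u)) <= wtr (wpow u (size w)).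

Definition maximal (w : seq bool) : Prop :=
  w <> [::] /\ forall u, u <> [::] -> wle u w.

Definition complete_optimal (S : seq bool -> Prop) : Prop :=
  (forall w, S w -> lyndon w /\ maximal w) /\
  (forall w, maximal w -> exists u j k, S u /\ (0 < k)%N /\ w = wpow (rot j u) k).

Definition optimal (w : seq bool) : Prop :=
  exists S, complete_optimal S /\ S w.

End Words.

(* Main.v *)
Require Import Defs.
From mathcomp Require Import all_boot all_order all_algebra.
From mathcomp Require Import zify ring lra.
Set Implicit Arguments. Unset Strict Implicit. Unset Printing Implicit Defensive.

Section Lyn.

Lemma wpowS' (w : seq bool) k : wpow w k.+1 = w ++ wpow w k.
Proof. by []. Qed.

Lemma wpowD (w : seq bool) p q : wpow w (p + q) = wpow w p ++ wpow w q.
Proof. by elim: p => [|p IH] //; rewrite addSn !wpowS' IH catA. Qed.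

Lemma wpowM (w : seq bool) p q : wpow (wpow w p) q = wpow w (p * q).
Proof. elim: q => [|q IH]; first by rewrite muln0.
by rewrite wpowS' IH mulnS wpowD. Qed.

Lemma size_wpow (w : seq bool) p : size (wpow w p) = (size w * p)%N.
Proof. elim: p => [|p IH]; first by rewrite muln0.
by rewrite wpowS' size_cat IH mulnS. Qed.

Lemma wpow1 (w : seq bool) : wpow w 1 = w.
Proof. by rewrite wpowS' cats0. Qed.

Lemma comm_pow (x y : seq bool) : x ++ y = y ++ x ->
  exists z p q, x = wpow z p /\ y = wpow z q.
Proof.
move: {2}(size x + size y)%N (leqnn (size x + size y)) => n.
elim: n x y => [|n IH] x y Hs E.
  case: x Hs E => [|? ?] //; case: y => [|? ?] // _ _.
  by exists [::], 0%N, 0%N.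
wlog le : x y Hs E / (size x <= size y)%N.
  move=> W; case: (leqP (size x) (size y)) => h; first exact: W.
  have [z [p [q [-> ->]]]] := W y x ltac:(by rewrite addnC) (esym E) (ltnW h).
  by exists z, q, p.
case: x Hs E le => [|c x'] Hs E le.
  by exists y, 0%N, 1%N; rewrite wpow1.
set x := c :: x' in Hs E le *.
have Ey : y = x ++ drop (size x) y.
  have : take (size x) (x ++ y) = take (size x) (y ++ x) by rewrite E.
  rewrite take_size_cat // takel_cat // => Hx.
  by rewrite {1}Hx cat_take_drop.
have E2 : x ++ drop (size x) y = drop (size x) y ++ x.
  move: E; rewrite {1 2}Ey -catA => /(congr1 (drop (size x))).
  by rewrite !drop_size_cat.
have Hs2 : (size x + size (drop (size x) y) <= n)%N.
  rewrite size_drop; move: Hs le; rewrite /x /=; lia.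
have [z [p [q [Ex Ey']]]] := IH _ _ Hs2 E2.
exists z, p, (p + q)%N; split => //.
by rewrite wpowD -Ex -Ey' -Ey.
Qed.

Fixpoint num (s : seq bool) : nat :=
  if s is x :: s' then (x * 2 ^ size s' + num s')%N else 0%N.

Lemma num_lt s : (num s < 2 ^ size s)%N.
Proof.
elim: s => [|x s IH] //=; rewrite expnS; case: x => /=; lia.
Qed.

Lemma lexlt_num s t : size s = size t -> lexlt s t = (num s < num t)%N.
Proof.
elim: s t => [|x s IH] [|y t] //= [Hst].
have := num_lt s; have := num_lt t; rewrite -Hst (IH t Hst).
by case: x; case: y => /=; lia.
Qed.

Lemma num_inj s t : size s = size t -> num s = num t -> s = t.
Proof.
elim: s t => [|x s IH] [|y t] //= [Hst].
have := num_lt s; have := num_lt t; rewrite -Hst => h1 h2.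
case: x; case: y => /= E; rewrite (IH t) //; lia.
Qed.

Lemma exists_min (f : nat -> nat) n :
  exists j, (j <= n)%N /\ forall k, (k <= n)%N -> (f j <= f k)%N.
Proof.
elim: n => [|n [j [jn Hj]]].
  by exists 0%N; split => // k; rewrite leqn0 => /eqP ->.
case: (leqP (f j) (f n.+1)) => h.
  exists j; split; first by apply: leq_trans jn _.
  move=> k; rewrite leq_eqVlt => /orP [/eqP -> // | ]; rewrite ltnS; exact: Hj.
exists n.+1; split => // k; rewrite leq_eqVlt => /orP [/eqP -> // | ].
rewrite ltnS => /Hj; move: h; lia.
Qed.

Lemma primitive_lyndon (w : seq bool) : w <> [::] ->
  (forall k, (0 < k < size w)%N -> rot k w <> w) ->
  exists u j, lyndon u /\ w = rot j u.
Proof.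
move=> wn Hp.
have [j [jn Hj]] := exists_min (fun j => num (rot j w)) (size w).
have Hall : forall k, (num (rot j w) <= num (rot k w))%N.
  by move=> k; rewrite (rot_minn k); apply: Hj; exact: geq_minr.
exists (rot j w), (size w - j)%N; split; last first.
  have := rotK j w; rewrite /rotr size_rot => {1}<-. done.
split; first by move=> /(congr1 size); rewrite size_rot /= => /size0nil.
move=> k Hk; rewrite size_rot in Hk.
rewrite lexlt_num ?size_rot //.
rewrite ltn_neqAle; apply/andP; split; last by rewrite rot_rot_add; exact: Hall.
apply/negP => /eqP E.
have : rot k (rot j w) = rot j w by apply: num_inj; rewrite ?size_rot.
by rewrite rot_rot => /rot_inj; apply: Hp.
Qed.

Lemma lyndon_exists (w : seq bool) : w <> [::] ->
  exists u j k, lyndon u /\ (0 < k)%N /\ w = wpow (rot j u) k.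
Proof.
move: {2}(size w) (leqnn (size w)) => n.
elim: n w => [|n IH] w Hs wn.
  by case: w Hs wn.
case: (boolP (has (fun k => (0 < k)%N && (rot k w == w)) (iota 0 (size w)))).
  move=> /hasP [k]; rewrite mem_iota add0n => /andP [_ kw] /andP [k0 /eqP Ek].
  have E : take k w ++ drop k w = drop k w ++ take k w.
    by rewrite cat_take_drop -{1}Ek.
  have [z [p [q [Ex Ey]]]] := comm_pow E.
  have Hx : size (take k w) = k by rewrite size_takel // ltnW.
  have Hy : size (drop k w) = (size w - k)%N by rewrite size_drop.
  have p0 : (0 < p)%N.
    case: p Ex => // Ex; move: Hx; rewrite Ex /= => h; rewrite -h in k0; done.
  have q0 : (0 < q)%N.
    case: q Ey => // Ey; move: Hy; rewrite Ey /= => h; move: kw; lia.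
  have sz : size w = (size z * (p + q))%N.
    by rewrite -size_wpow wpowD -Ex -Ey cat_take_drop.
  have z0 : (0 < size z)%N.
    case: z Ex Ey sz => //= _ _; rewrite mul0n => sw; move: kw; lia.
  have zn : z <> [::] by case: z z0 {Ex Ey sz}.
  have Hsz : (size z <= n)%N.
    move: Hs; rewrite sz => h; move: p0 q0 z0 h; nia.
  have [u [j [k' [Lu [k'0 Ez]]]]] := IH z Hsz zn.
  exists u, j, (k' * (p + q))%N; split => //; split; first by rewrite muln_gt0 k'0 addn_gt0 p0.
  by rewrite -wpowM -Ez -(cat_take_drop k w) Ex Ey wpowD.
move=> /hasPn Hn.
have [u [j [Lu Ew]]] : exists u j, lyndon u /\ w = rot j u.
  apply: primitive_lyndon => // k /andP [k0 kw] E.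
  have := Hn k; rewrite mem_iota add0n kw k0 E eqxx => /(_ isT); done.
by exists u, j, 1%N; split => //; split => //; rewrite wpow1.
Qed.

End Lyn.

Import Order.TTheory GRing.Theory Num.Theory.
Local Open Scope ring_scope.

Section FG.
Variable R : realFieldType.
Implicit Types x y a b : R.

Definition FF x := x + x^-1.
Definition GG x := if 1 <= x then x else x^-1.

Lemma GG_ge1 x : 0 < x -> 1 <= GG x.
Proof. move=> x0; rewrite /GG; case: ifP => // /negbT; rewrite -ltNge => h.
by rewrite invf_ge1 // ltW. Qed.

Lemma GG_gt0 x : 0 < x -> 0 < GG x.
Proof. by move=> x0; apply: lt_le_trans (GG_ge1 x0). Qed.

Lemma le_GG x : 0 < x -> x <= GG x.
Proof. move=> x0; rewrite /GG; case: ifP => // /negbT; rewrite -ltNge => h.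
apply: le_trans (ltW h) _; by rewrite invf_ge1 // ltW. Qed.

Lemma leV_GG x : 0 < x -> x^-1 <= GG x.
Proof. move=> x0; rewrite /GG; case: ifP => // h.
by apply: (le_trans _ h); rewrite invf_le1. Qed.

Lemma GG_le x c : 0 < x -> x <= c -> x^-1 <= c -> GG x <= c.
Proof. by rewrite /GG; case: ifP. Qed.

Lemma FF_GG x : 0 < x -> FF (GG x) = FF x.
Proof. by move=> x0; rewrite /GG /FF; case: ifP => // _; rewrite invrK addrC. Qed.

Lemma GG_inv x : 0 < x -> GG x^-1 = GG x.
Proof.
move=> x0; have xi0 : 0 < x^-1 by rewrite invr_gt0.
apply/eqP; rewrite eq_le; apply/andP; split.
  by apply: (GG_le xi0); [exact: leV_GG | rewrite invrK; exact: le_GG].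
apply: (GG_le x0); last exact: le_GG.
by rewrite -{1}(invrK x); exact: leV_GG.
Qed.

Lemma GG_mul x y : 0 < x -> 0 < y -> GG (x * y) <= GG x * GG y.
Proof.
move=> x0 y0; apply: GG_le; first exact: mulr_gt0.
  by apply: ler_pM; [exact: ltW|exact: ltW|apply: le_GG|apply: le_GG].
rewrite invfM; apply: ler_pM; [by rewrite invr_ge0 ltW|by rewrite invr_ge0 ltW|exact: leV_GG|exact: leV_GG].
Qed.

Lemma GG_exp x n : 0 < x -> GG (x ^+ n) = GG x ^+ n.
Proof.
move=> x0; rewrite /GG; case: (leP 1 x) => h.
  by rewrite exprn_ege1.
case: n => [|n]; first by rewrite !expr0 lexx.
have : x ^+ n.+1 < 1 by rewrite exprn_ilt1 // ltW.
by rewrite ltNge => /negPf ->; rewrite exprVn.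
Qed.

Lemma FF_le a b : 1 <= a -> a <= b -> FF a <= FF b.
Proof.
move=> a1 ab; have b1 : 1 <= b by apply: le_trans ab.
have a0 : 0 < a by lra. have b0 : 0 < b by lra.
have ia : a * a^-1 = 1 by rewrite divff // gt_eqF.
have ib : b * b^-1 = 1 by rewrite divff // gt_eqF.
have ia0 : 0 < a^-1 by rewrite invr_gt0.
have ib0 : 0 < b^-1 by rewrite invr_gt0.
have ia1 : a^-1 <= 1 by rewrite invf_le1.
have ib1 : b^-1 <= 1 by rewrite invf_le1.
have E : FF b - FF a = (b - a) * (1 - a^-1 * b^-1).
  rewrite /FF; transitivity (b - a - (b * b^-1) * a^-1 + (a * a^-1) * b^-1).
    by rewrite ia ib; ring.
  ring.
have : 0 <= (b - a) * (1 - a^-1 * b^-1).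
  apply: mulr_ge0; first lra.
  have : a^-1 * b^-1 <= 1 by rewrite -(mulr1 1); apply: ler_pM; lra.
  lra.
rewrite -E; lra.
Qed.

Lemma FF_lt a b : 1 <= a -> a < b -> FF a < FF b.
Proof.
move=> a1 ab; have b1 : 1 < b by apply: le_lt_trans ab.
have a0 : 0 < a by lra. have b0 : 0 < b by lra.
have ia : a * a^-1 = 1 by rewrite divff // gt_eqF.
have ib : b * b^-1 = 1 by rewrite divff // gt_eqF.
have ia0 : 0 < a^-1 by rewrite invr_gt0.
have ib0 : 0 < b^-1 by rewrite invr_gt0.
have ia1 : a^-1 <= 1 by rewrite invf_le1.
have ib1 : b^-1 < 1 by rewrite invf_lt1.
have E : FF b - FF a = (b - a) * (1 - a^-1 * b^-1).
  rewrite /FF; transitivity (b - a - (b * b^-1) * a^-1 + (a * a^-1) * b^-1).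
    by rewrite ia ib; ring.
  ring.
have : 0 < (b - a) * (1 - a^-1 * b^-1).
  apply: mulr_gt0; first lra.
  have : a^-1 * b^-1 < 1 by nra.
  lra.
rewrite -E; lra.
Qed.

Lemma FF_mono a b : 1 <= a -> 1 <= b -> (FF a <= FF b) = (a <= b).
Proof.
move=> a1 b1; case: (leP a b) => h; first by rewrite FF_le.
by apply/negbTE; rewrite -ltNge; apply: FF_lt.
Qed.
End FG.
Section Mx.
Variable R : realFieldType.
Implicit Types (A M : 'M[R]_2) (u v : 'cV[R]_2).

Lemma det2 A : \det A = A 0 0 * A 1 1 - A 0 1 * A 1 0.
Proof.
rewrite (expand_det_row A 0) !big_ord_recl big_ord0 /cofactor !det_mx11 /= !mxE /=.
rewrite expr0 expr1 mul1r mulN1r addr0 mulrN.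
have E1 : lift (0 : 'I_2) (0 : 'I_1) = 1 by apply/val_inj.
have E4 : lift (1 : 'I_2) (0 : 'I_1) = 0 by apply/val_inj.
by rewrite E1 E4.
Qed.

Lemma tr2 A : \tr A = A 0 0 + A 1 1.
Proof. rewrite /mxtrace !big_ord_recl big_ord0 addr0.
have E3 : lift (ord0 : 'I_2) (ord0 : 'I_1) = 1 by apply/val_inj.
by rewrite E3. Qed.

Lemma mulmx2_0 A v : (A *m v) 0 0 = A 0 0 * v 0 0 + A 0 1 * v 1 0.
Proof.
rewrite !mxE !big_ord_recl big_ord0 addr0.
have E3 : lift (ord0 : 'I_2) (ord0 : 'I_1) = 1 by apply/val_inj.
by rewrite E3.
Qed.

Lemma mulmx2_1 A v : (A *m v) 1 0 = A 1 0 * v 0 0 + A 1 1 * v 1 0.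
Proof.
rewrite !mxE !big_ord_recl big_ord0 addr0.
have E3 : lift (ord0 : 'I_2) (ord0 : 'I_1) = 1 by apply/val_inj.
by rewrite E3.
Qed.

Lemma ord2_cases (i : 'I_2) : i = 0 \/ i = 1.
Proof.
case: i => [[|[|n]] Hn]; [left|right|]; try by apply/val_inj.
by [].
Qed.

Lemma cV2P u v : u 0 0 = v 0 0 -> u 1 0 = v 1 0 -> u = v.
Proof.
move=> H0 H1; apply/matrixP => i j; rewrite [j]ord1.
by case: (ord2_cases i) => ->.
Qed.

Lemma cV2_neq0 u : u <> 0 -> u 0 0 != 0 \/ u 1 0 != 0.
Proof.
move=> Hu; case: (eqVneq (u 0 0) 0) => H0; last by left.
case: (eqVneq (u 1 0) 0) => H1; last by right.
by exfalso; apply: Hu; apply: cV2P; rewrite mxE.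
Qed.

Lemma eig_eqs M v l : M *m v = l *: v ->
  M 0 0 * v 0 0 + M 0 1 * v 1 0 = l * v 0 0 /\
  M 1 0 * v 0 0 + M 1 1 * v 1 0 = l * v 1 0.
Proof.
move=> H; split.
  by rewrite -mulmx2_0 H mxE.
by rewrite -mulmx2_1 H mxE.
Qed.

Lemma eig_tr M v l : \det M = 1 -> v <> 0 -> M *m v = l *: v ->
  l * \tr M = l ^+ 2 + 1.
Proof.
move=> Hd Hv /eig_eqs [E1 E2].
rewrite det2 in Hd; rewrite tr2.
have K0 : (l ^+ 2 - (M 0 0 + M 1 1) * l + 1) * v 0 0 =
  (M 1 1 - l) * (M 0 0 * v 0 0 + M 0 1 * v 1 0 - l * v 0 0)
  - M 0 1 * (M 1 0 * v 0 0 + M 1 1 * v 1 0 - l * v 1 0)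
  - (M 0 0 * M 1 1 - M 0 1 * M 1 0 - 1) * v 0 0 by ring.
have K1 : (l ^+ 2 - (M 0 0 + M 1 1) * l + 1) * v 1 0 =
  (M 0 0 - l) * (M 1 0 * v 0 0 + M 1 1 * v 1 0 - l * v 1 0)
  - M 1 0 * (M 0 0 * v 0 0 + M 0 1 * v 1 0 - l * v 0 0)
  - (M 0 0 * M 1 1 - M 0 1 * M 1 0 - 1) * v 1 0 by ring.
rewrite E1 E2 Hd in K0 K1.
have {}K0 : (l ^+ 2 - (M 0 0 + M 1 1) * l + 1) * v 0 0 = 0 by rewrite K0; ring.
have {}K1 : (l ^+ 2 - (M 0 0 + M 1 1) * l + 1) * v 1 0 = 0 by rewrite K1; ring.
have : l ^+ 2 - (M 0 0 + M 1 1) * l + 1 = 0.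
  case: (cV2_neq0 Hv) => Hn.
    by move/eqP: K0; rewrite mulf_eq0 (negPf Hn) orbF => /eqP.
  by move/eqP: K1; rewrite mulf_eq0 (negPf Hn) orbF => /eqP.
move=> H; lra.
Qed.

Lemma eig_pos M v l : \det M = 1 -> v <> 0 -> M *m v = l *: v -> 2 <= \tr M ->
  0 < l.
Proof. move=> Hd Hv He Ht; have := eig_tr Hd Hv He; nra. Qed.

End Mx.

Section Ev.
Variables (R : realFieldType) (A B : 'M[R]_2) (v : 'cV[R]_2) (al be : R).
Hypotheses (dA : \det A = 1) (dB : \det B = 1) (v0 : v <> 0)
  (HA : A *m v = al *: v) (HB : B *m v = be *: v) (al0 : 0 < al) (be0 : 0 < be).

Definition ev (w : seq bool) : R := foldr (fun c r => (if c then be else al) * r) 1 w.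

Lemma phi_ev w : phi A B w *m v = ev w *: v.
Proof.
elim: w => [|c w IH] /=; first by rewrite mul1mx scale1r.
by rewrite -mulmxA IH -scalemxAr; case: c; rewrite ?HA ?HB scalerA mulrC.
Qed.

Lemma det_phi w : \det (phi A B w) = 1.
Proof.
elim: w => [|c w IH] /=; first by rewrite det1.
by rewrite mulmxE detM IH mulr1; case: c.
Qed.

Lemma ev_pos w : 0 < ev w.
Proof. elim: w => [|c w IH] //=.
by apply: mulr_gt0 => //; case: c. Qed.

Lemma wtr_ev w : wtr A B w = FF (ev w).
Proof.
have := eig_tr (det_phi w) v0 (phi_ev w).
have e0 : ev w != 0 by rewrite gt_eqF // ev_pos.
rewrite /wtr /FF => H.
apply: (mulfI e0); rewrite H mulrDr divff //; ring.
Qed.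

Lemma ev_cat s t : ev (s ++ t) = ev s * ev t.
Proof. elim: s => [|c s IH] /=; first by rewrite mul1r. by rewrite IH mulrA. Qed.

Lemma wpowS w k : wpow w k.+1 = w ++ wpow w k.
Proof. by []. Qed.

Lemma ev_wpow w k : ev (wpow w k) = ev w ^+ k.
Proof. elim: k => [|k IH]; first by rewrite expr0.
by rewrite wpowS ev_cat IH exprS. Qed.

Lemma ev_count w : ev w = al ^+ count negb w * be ^+ count id w.
Proof.
elim: w => [|c w IH] /=; first by rewrite !expr0 mulr1.
rewrite IH; case: c => /=; rewrite ?add0n ?add1n exprS; ring.
Qed.

Lemma wle_GG u w : wle A B u w <-> GG (ev u) ^+ size w <= GG (ev w) ^+ size u.
Proof.
rewrite /wle !wtr_ev !ev_wpow -(FF_GG (exprn_gt0 _ (ev_pos u))).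
rewrite -(FF_GG (exprn_gt0 _ (ev_pos w))) !GG_exp ?ev_pos //.
rewrite FF_mono //; apply: exprn_ege1; exact: GG_ge1 (ev_pos _).
Qed.


Lemma wpow_nseq (c : bool) n : wpow [:: c] n = nseq n c.
Proof. by elim: n => [|n IH] //; rewrite wpowS IH. Qed.

Lemma core (P : bool -> bool) (G0 : R) (c0 : bool) :
  P c0 ->
  (forall c, P c -> GG (ev [:: c]) = G0) ->
  (forall w, GG (ev w) <= G0 ^+ size w) ->
  (forall w, w <> [::] -> G0 ^+ size w <= GG (ev w) ->
      exists c, P c /\ w = nseq (size w) c) ->
  complete_optimal A B (fun w => exists c, P c /\ w = [:: c]).
Proof.
move=> Pc0 H1 H2 H3; split.
  move=> w [c [Pc ->]]; split.
    by split => // k /andP [k0 k1]; move: k1; rewrite /= ltnS leqNgt k0.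
  split => // u _; apply/wle_GG; rewrite /= expr1 H1 //.
move=> w [wn Hw].
have ne : [:: c0] <> [::] by discriminate.
have := Hw [:: c0] ne; move/wle_GG.
rewrite (_ : size [:: c0] = 1%N) // expr1 (H1 _ Pc0) => H.
have [c [Pc Ew]] := H3 w wn H.
exists [:: c], 0%N, (size w); split; first by exists c.
split; last by rewrite rot0 wpow_nseq.
by case: w wn {Hw H Ew} => //.
Qed.

Lemma GG_ev_bound w :
  GG (ev w) <= GG al ^+ count negb w * GG be ^+ count id w.
Proof.
rewrite ev_count; apply: le_trans (GG_mul _ _) _; rewrite ?exprn_gt0 //.
by rewrite !GG_exp.
Qed.

Lemma count_split w : (count negb w + count id w)%N = size w.
Proof. by rewrite addnC; have := count_predC id w. Qed.

Lemma count_id0 w : count id w = 0%N -> w = nseq (size w) false.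
Proof. elim: w => [|[] w IH] //= H. by rewrite add0n in H; rewrite -IH. Qed.

Lemma count_negb0 w : count negb w = 0%N -> w = nseq (size w) true.
Proof. elim: w => [|[] w IH] //= H. by rewrite add0n in H; rewrite -IH. Qed.


Lemma exp_le (x y : R) n : 0 <= x -> x <= y -> x ^+ n <= y ^+ n.
Proof.
move=> x0 xy; elim: n => [|n IH]; first by rewrite !expr0.
rewrite !exprS; apply: ler_pM => //; exact: exprn_ge0.
Qed.

Lemma bound_le i j (x y : R) : 0 <= y -> y <= x -> x ^+ i * y ^+ j <= x ^+ (i + j).
Proof.
move=> y0 yx; rewrite exprD; apply: ler_pM; rewrite ?exprn_ge0 //.
  by apply: le_trans yx.
exact: exp_le.
Qed.

Lemma bound_lt i j (x y : R) : 0 <= y -> y < x -> (0 < j)%N ->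
  x ^+ i * y ^+ j < x ^+ (i + j).
Proof.
move=> y0 yx j0; rewrite exprD ltr_pM2l.
  by rewrite ltrXn2r // -lt0n.
by apply: exprn_gt0; apply: le_lt_trans yx.
Qed.

Lemma GG_gt1 (x : R) : 0 < x -> x != 1 -> 1 < GG x.
Proof.
move=> x0 x1; rewrite lt_neqAle GG_ge1 // andbT; apply/eqP => H.
move: H; rewrite /GG; case: ifP => h H; first by rewrite -H eqxx in x1.
by move: x1; rewrite -[x]invrK -H invr1 eqxx.
Qed.

Lemma opt_a : GG be < GG al ->
  complete_optimal A B (fun w => exists c, (c == false) /\ w = [:: c]).
Proof.
move=> lt; have ga := GG_ge1 al0; have gb := GG_ge1 be0.
apply: (@core _ (GG al) false) => //.
- by move=> c /eqP ->; rewrite /= mulr1.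
- move=> w; apply: le_trans (GG_ev_bound w) _; rewrite -count_split.
  apply: bound_le; [exact: le_trans ler01 gb | exact: ltW].
- move=> w wn H; exists false; split => //; apply: count_id0.
  apply/eqP; rewrite -leqn0 leqNgt; apply/negP => j0.
  have := bound_lt (count negb w) (le_trans ler01 gb) lt j0.
  rewrite count_split => H2.
  have := le_lt_trans (GG_ev_bound w) H2; rewrite ltNge H //.
Qed.

Lemma opt_b : GG al < GG be ->
  complete_optimal A B (fun w => exists c, (c == true) /\ w = [:: c]).
Proof.
move=> lt; have ga := GG_ge1 al0; have gb := GG_ge1 be0.
apply: (@core _ (GG be) true) => //.
- by move=> c /eqP ->; rewrite /= mulr1.
- move=> w; apply: le_trans (GG_ev_bound w) _; rewrite -count_split addnC mulrC.
  apply: bound_le; [exact: le_trans ler01 ga | exact: ltW].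
- move=> w wn H; exists true; split => //; apply: count_negb0.
  apply/eqP; rewrite -leqn0 leqNgt; apply/negP => j0.
  have := bound_lt (count id w) (le_trans ler01 ga) lt j0.
  rewrite addnC count_split mulrC => H2.
  have := le_lt_trans (GG_ev_bound w) H2; rewrite ltNge H //.
Qed.

Lemma opt_mixed : al * be = 1 -> al != 1 ->
  complete_optimal A B (fun w => exists c, true /\ w = [:: c]).
Proof.
move=> ab a1.
have al_ne0 : al != 0 by rewrite gt_eqF.
have beE : be = al^-1 by apply: (mulfI al_ne0); rewrite ab divff.
have gab : GG be = GG al by rewrite beE GG_inv.
have g1 := GG_gt1 al0 a1.
apply: (@core _ (GG al) false) => //.
- by move=> [] _; rewrite /= mulr1.
- by move=> w; apply: le_trans (GG_ev_bound w) _; rewrite -count_split gab exprD.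
- move=> w wn H.
  case: (posnP (count negb w)) => i0.
    by exists true; split => //; apply: count_negb0.
  case: (posnP (count id w)) => j0.
    by exists false; split => //; apply: count_id0.
  exfalso.
  have E : ev w = al ^+ (count negb w).-1 * be ^+ (count id w).-1.
    rewrite ev_count -(prednK i0) -(prednK j0) !exprS.
    transitivity ((al * be) * (al ^+ (count negb w).-1 * be ^+ (count id w).-1)).
      ring.
    by rewrite ab mul1r.
  have : GG (ev w) <= GG al ^+ ((count negb w).-1 + (count id w).-1).
    rewrite E exprD -gab; apply: le_trans (GG_mul _ _) _; rewrite ?exprn_gt0 //.
    by rewrite !GG_exp // gab.
  have : GG al ^+ ((count negb w).-1 + (count id w).-1) < GG al ^+ size w.
    rewrite ltr_eXn2l // -count_split -(prednK i0) -(prednK j0).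
    by rewrite addSn addnS ltnS leqnSn.
  move=> h1 h2; have := le_lt_trans h2 h1; rewrite ltNge H //.
Qed.

Lemma all_max_equal : al = be -> forall w, w <> [::] -> maximal A B w.
Proof.
move=> ab w wn; split => // u _; apply/wle_GG.
have E : forall s, GG (ev s) = GG al ^+ size s.
  move=> s; rewrite ev_count -ab -exprD count_split GG_exp //.
by rewrite !E -!exprM mulnC.
Qed.

End Ev.

Section Geo.
Variable R : realFieldType.
Implicit Types (M : 'M[R]_2) (u v w : 'cV[R]_2).

Definition D2 (x y : R * R) := x.1 * y.2 - x.2 * y.1.
Definition hom (p : P1 R) : R * R := match p with Fin x => (x, 1) | Inf => (1, 0) end.
Definition ori (x y z : R * R) := D2 x y * D2 y z * D2 z x.

Lemma cub3 (x1 y1 x2 y2 x3 y3 : R) : x1 <= y1 -> x2 <= y2 -> x3 <= y3 ->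
  0 <= (y1 - x1) * (y2 - x2) * (y3 - x3).
Proof. by move=> h1 h2 h3; rewrite !mulr_ge0 // subr_ge0. Qed.

Ltac weaken_lt := repeat match goal with
 | H : is_true (?u < ?w) |- _ => have := ltW H; clear H; move=> H
 end.

Ltac try_cub := match goal with
 | h1 : is_true (_ <= _), h2 : is_true (_ <= _), h3 : is_true (_ <= _) |- _ =>
     have := cub3 h1 h2 h3; nra
 end.

Ltac try_cub2 := match goal with
 | h1 : is_true (?b < ?a), h2 : is_true (?a <= ?c) |- _ =>
     have := cub3 h2 (le_trans (ltW h1) h2) (ltW h1); nra
 | h1 : is_true (?b < ?a), h2 : is_true (?c <= ?b) |- _ =>
     have := cub3 (le_trans h2 (ltW h1)) h2 (ltW h1); nra
 end.

Ltac solve_arc := repeat match goal with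
 | H : is_true (_ && _) |- _ => move/andP: H => [? ?]
 | H : is_true (_ || _) |- _ => move/orP: H => [?|?]
 | H : is_true (if ?u <= ?w then _ else _) |- _ => case: (leP u w) H => ? H
 | H : is_true true |- _ => clear H
 end; try nra; try try_cub2; try (weaken_lt; try_cub).

Lemma arc_ori p q x : Defs.arc p q x -> 0 <= ori (hom p) (hom x) (hom q).
Proof.
case: p => [a|]; case: q => [b|]; case: x => [c|];
  rewrite /Defs.arc /p1le /ori /D2 /= => H; solve_arc.
Qed.


Definition pv (v : 'cV[R]_2) : R * R := (v 0 0, v 1 0).

Lemma sq_gt0 (x : R) : x != 0 -> 0 < x ^+ 2.
Proof. by move=> h; rewrite exprn_even_gt0 // h orbT. Qed.

Lemma hom_proj v : v <> 0 -> exists k, k != 0 /\ hom (proj v) = (k * v 0 0, k * v 1 0).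
Proof.
move=> vn; rewrite /proj; case: eqP => h.
  have h0 : v 0 0 != 0 by case: (cV2_neq0 vn) => // /eqP.
  exists (v 0 0)^-1; split; first by rewrite invr_eq0.
  by rewrite /= mulVf // h mulr0.
have h1 : v 1 0 != 0 by apply/eqP.
exists (v 1 0)^-1; split; first by rewrite invr_eq0.
by rewrite /= mulVf // mulrC.
Qed.

Lemma ori_scale k1 k2 k3 (x y z : R * R) :
  ori (k1 * x.1, k1 * x.2) (k2 * y.1, k2 * y.2) (k3 * z.1, k3 * z.2) =
  (k1 * k2 * k3) ^+ 2 * ori x y z.
Proof. by case: x => ? ?; case: y => ? ?; case: z => ? ?; rewrite /ori /D2 /=; ring. Qed.

Lemma arc_ori_v u v w : u <> 0 -> v <> 0 -> w <> 0 ->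
  Defs.arc (proj u) (proj w) (proj v) -> 0 <= ori (pv u) (pv v) (pv w).
Proof.
move=> un vn wn H; have := arc_ori H.
have [k1 [k10 ->]] := hom_proj un.
have [k2 [k20 ->]] := hom_proj vn.
have [k3 [k30 ->]] := hom_proj wn.
have := ori_scale k1 k2 k3 (pv u) (pv v) (pv w); rewrite /= => ->.
by rewrite pmulr_rge0 // sq_gt0 // !mulf_neq0.
Qed.

Lemma mob_proj M v : v <> 0 -> mob M (proj v) = proj (M *m v).
Proof.
move=> vn; rewrite /proj mulmx2_0 mulmx2_1; case: eqP => h /=.
  have h0 : v 0 0 != 0 by case: (cV2_neq0 vn) => // /eqP.
  rewrite h !mulr0 !addr0 mulf_eq0 (negPf h0) orbF.
  case: eqP => // /eqP hM; congr Fin; field; by rewrite hM h0.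
have h1 : v 1 0 != 0 by apply/eqP.
have E : M 1 0 * v 0 0 + M 1 1 * v 1 0 = v 1 0 * (M 1 0 * (v 0 0 / v 1 0) + M 1 1).
  by field.
rewrite E mulf_eq0 (negPf h1) /=.
case: eqP => // /eqP hd; congr Fin; field; by rewrite h1 E mulf_neq0.
Qed.

Lemma D2_par u v : u <> 0 -> D2 (pv u) (pv v) = 0 -> exists k, v = k *: u.
Proof.
rewrite /D2 /= => un H; case: (cV2_neq0 un) => h.
  exists (v 0 0 / u 0 0); apply: cV2P; rewrite !mxE; first by field.
  have E : u 0 0 * (v 0 0 / u 0 0 * u 1 0) = v 0 0 * u 1 0 by field.
  apply: (mulfI h); rewrite E; lra.
have h0 : u 0 0 = 0 \/ u 0 0 != 0 by case: eqP; [left|right].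
exists (v 1 0 / u 1 0); apply: cV2P; rewrite !mxE; last by field.
have E : u 1 0 * (v 1 0 / u 1 0 * u 0 0) = v 1 0 * u 0 0 by field.
apply: (mulfI h); rewrite E; lra.
Qed.

Lemma proj_D2 u v : u <> 0 -> v <> 0 -> proj u = proj v -> D2 (pv u) (pv v) = 0.
Proof.
move=> un vn; rewrite /proj /D2 /=.
case: eqP => hu; case: eqP => hv //.
- by move=> _; rewrite hu hv mulr0 mul0r subrr.
- move=> [] E; have hu' : u 1 0 != 0 by apply/eqP.
  have hv' : v 1 0 != 0 by apply/eqP.
  have : u 0 0 * v 1 0 = (u 0 0 / u 1 0) * (u 1 0 * v 1 0) by field.
  rewrite E => ->; apply/eqP; rewrite subr_eq0; apply/eqP; field; exact: hv'.
Qed.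

Lemma eig_par M u v l k : M *m u = l *: u -> v = k *: u -> M *m v = l *: v.
Proof. by move=> H ->; rewrite -scalemxAr H !scalerA mulrC. Qed.

Lemma eig_uniq M u l l' : u <> 0 -> M *m u = l *: u -> M *m u = l' *: u -> l = l'.
Proof.
move=> un H1; rewrite H1 => /eqP; rewrite -subr_eq0 -scalerBl scaler_eq0.
case/orP => [/eqP h|/eqP //]; by apply/eqP; rewrite -subr_eq0 h.
Qed.


Lemma p1le_refl (p : P1 R) : p1le p p.
Proof. by case: p => //= x; rewrite lexx. Qed.

Lemma arc_l (p q : P1 R) : Defs.arc p q p.
Proof. by rewrite /Defs.arc p1le_refl; case: ifP. Qed.

Lemma arc_r (p q : P1 R) : Defs.arc p q q.
Proof. by rewrite /Defs.arc p1le_refl; case: ifP => // ->. Qed.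

Lemma ori_swap (x y z : R * R) : ori z y x = - ori x y z.
Proof. by rewrite /ori /D2; ring. Qed.

Lemma geo_key M (e f h : 'cV[R]_2) c d (S : P1 R -> bool) :
  e <> 0 -> f <> 0 -> h <> 0 ->
  M *m e = c *: e -> M *m f = d *: f -> 0 < c -> c < d ->
  D2 (pv e) (pv f) != 0 -> D2 (pv h) (pv f) != 0 -> D2 (pv e) (pv h) != 0 ->
  ((forall x, S x = Defs.arc (proj f) (proj h) x) \/
   (forall x, S x = Defs.arc (proj h) (proj f) x)) ->
  Defs.invariant M S -> S (proj e) -> False.
Proof.
move=> en fn hn He Hf c0 cd n1 n2 n3 HS inv Se.
have Sh : S (proj h) by case: HS => ->; [exact: arc_r | exact: arc_l].
have Sg : S (proj (M *m h)) by rewrite -mob_proj //; apply: inv.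
move: Sg; move gE : (M *m h) => g Sg.
move: (eig_eqs He) (eig_eqs Hf) => [E1 E2] [F1 F2].
have G0 : D2 (pv e) (pv f) * g 0 0 =
    c * D2 (pv h) (pv f) * e 0 0 + d * D2 (pv e) (pv h) * f 0 0.
  rewrite -gE mulmx2_0 /D2 /=.
  transitivity ((h 0 0 * f 1 0 - h 1 0 * f 0 0) * (M 0 0 * e 0 0 + M 0 1 * e 1 0)
     + (e 0 0 * h 1 0 - e 1 0 * h 0 0) * (M 0 0 * f 0 0 + M 0 1 * f 1 0)); first ring.
  rewrite E1 F1; ring.
have G1 : D2 (pv e) (pv f) * g 1 0 =
    c * D2 (pv h) (pv f) * e 1 0 + d * D2 (pv e) (pv h) * f 1 0.
  rewrite -gE mulmx2_1 /D2 /=.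
  transitivity ((h 0 0 * f 1 0 - h 1 0 * f 0 0) * (M 1 0 * e 0 0 + M 1 1 * e 1 0)
     + (e 0 0 * h 1 0 - e 1 0 * h 0 0) * (M 1 0 * f 0 0 + M 1 1 * f 1 0)); first ring.
  rewrite E2 F2; ring.
have key : ori (pv f) (pv e) (pv h) * ori (pv f) (pv g) (pv h) * D2 (pv e) (pv f) ^+ 2
   = c * (c - d) * (D2 (pv e) (pv f) ^+ 2 * D2 (pv h) (pv f) ^+ 4 * D2 (pv e) (pv h) ^+ 2).
  transitivity (ori (pv f) (pv e) (pv h) *
     ori (pv f) (D2 (pv e) (pv f) * g 0 0, D2 (pv e) (pv f) * g 1 0) (pv h)).
    by rewrite /ori /D2 /=; ring.
  rewrite G0 G1 /ori /D2 /=; ring.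
have K : 0 < D2 (pv e) (pv f) ^+ 2 * D2 (pv h) (pv f) ^+ 4 * D2 (pv e) (pv h) ^+ 2.
  apply: mulr_gt0; last exact: sq_gt0.
  apply: mulr_gt0; first exact: sq_gt0.
  by rewrite exprn_even_gt0 // n2 orbT.
have C : c * (c - d) < 0 by rewrite pmulr_rlt0 // subr_lt0.
have Dp : 0 < D2 (pv e) (pv f) ^+ 2 by rewrite sq_gt0.
have neg : ori (pv f) (pv e) (pv h) * ori (pv f) (pv g) (pv h) < 0.
  by rewrite -(pmulr_llt0 _ Dp) key nmulr_rlt0.
have gn : g <> 0.
  move=> g0; move: neg.
  have -> : ori (pv f) (pv g) (pv h) = 0 by rewrite g0 /ori /D2 /pv !mxE /=; ring.
  by rewrite mulr0 ltxx.
case: HS => HS; rewrite HS in Se; rewrite HS in Sg.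
  have o1 := arc_ori_v fn en hn Se; have o2 := arc_ori_v fn gn hn Sg.
  by move: (mulr_ge0 o1 o2); rewrite leNgt neg.
have o1 := arc_ori_v hn en fn Se; have o2 := arc_ori_v hn gn fn Sg.
rewrite ori_swap in o1; rewrite ori_swap in o2.
by move: (mulr_ge0 o1 o2); rewrite mulrNN leNgt neg.
Qed.

End Geo.

Section Main.
Variable R : realFieldType.
Implicit Types (A B M : 'M[R]_2) (u v : 'cV[R]_2).

Lemma tr_FF M v l : \det M = 1 -> v <> 0 -> M *m v = l *: v -> 0 < l -> \tr M = FF l.
Proof.
move=> d vn H l0; have := eig_tr d vn H; rewrite /FF => E.
have ln : l != 0 by rewrite gt_eqF.
apply: (mulfI ln); rewrite E mulrDr divff //; ring.
Qed.

Lemma attr_hyp M p : SL2 M -> hyperbolic M -> attr_fp M p ->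
  exists v l, [/\ v <> 0, M *m v = l *: v, 1 < l & p = proj v].
Proof.
rewrite /SL2 /hyperbolic => d h [v [l [vn [H [l1 ->]]]]].
have l0 := eig_pos d vn H (ltW h).
exists v, l; split => //.
rewrite gtr0_norm // in l1; rewrite lt_neqAle l1 andbT; apply/eqP => E.
have := eig_tr d vn H; rewrite -E; lra.
Qed.

Lemma rep_hyp M p : SL2 M -> hyperbolic M -> rep_fp M p ->
  exists v l, [/\ v <> 0, M *m v = l *: v, 0 < l, l < 1 & p = proj v].
Proof.
rewrite /SL2 /hyperbolic => d h [v [l [vn [H [l1 ->]]]]].
have l0 := eig_pos d vn H (ltW h).
exists v, l; split => //.
rewrite gtr0_norm // in l1; rewrite lt_neqAle l1 andbT; apply/eqP => E.
have := eig_tr d vn H; rewrite E; lra.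
Qed.

Lemma FF_inv (x : R) : FF x^-1 = FF x.
Proof. by rewrite /FF invrK addrC. Qed.

Lemma FF_inj1 (a b : R) : 1 <= a -> 1 <= b -> FF a = FF b -> a = b.
Proof.
move=> a1 b1 E; apply/eqP; rewrite eq_le -(FF_mono a1 b1) -(FF_mono b1 a1) E.
by rewrite lexx.
Qed.

Lemma common A B u w l m : u <> 0 -> w <> 0 -> proj u = proj w ->
  A *m u = l *: u -> B *m w = m *: w -> B *m u = m *: u.
Proof.
move=> un wn E Hu Hw.
have D : D2 (pv w) (pv u) = 0 by apply: proj_D2 => //.
have [k ->] := D2_par wn D.
exact: (eig_par Hw (erefl _)).
Qed.

Lemma proj_scale v k : k != 0 -> proj (k *: v) = proj v.
Proof.
move=> k0; rewrite /proj !mxE mulf_eq0 (negPf k0) /=.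
case: eqP => // h; congr Fin; field; by apply/andP; split => //; apply/eqP.
Qed.

Lemma D2_neq_proj u w : u <> 0 -> w <> 0 -> proj u <> proj w -> D2 (pv u) (pv w) != 0.
Proof.
move=> un wn np; apply/eqP => D; apply: np.
have [k Ek] := D2_par un D.
have k0 : k != 0 by apply/eqP => k0; apply: wn; rewrite Ek k0 scale0r.
by rewrite Ek proj_scale.
Qed.

Lemma D2_neq_eig M u w l m : u <> 0 -> w <> 0 -> M *m u = l *: u -> M *m w = m *: w ->
  l != m -> D2 (pv u) (pv w) != 0.
Proof.
move=> un wn Hu Hw lm; apply/eqP => D.
have [k Ek] := D2_par un D.
have := eig_par Hu Ek; move/(eig_uniq wn Hw) => E.
by rewrite E eqxx in lm.
Qed.

Lemma eig_inv M u l : \det M = 1 -> M *m u = l *: u -> l != 0 ->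
  invmx M *m u = l^-1 *: u.
Proof.
move=> d H l0.
have uM : M \in unitmx by rewrite unitmxE d unitr1.
have : invmx M *m (M *m u) = u by rewrite mulKmx.
rewrite H -scalemxAr => E.
by rewrite -{2}E scalerA mulVf // scale1r.
Qed.

Lemma co_ext A B (S S' : seq bool -> Prop) : complete_optimal A B S ->
  (forall w, S w <-> S' w) -> complete_optimal A B S'.
Proof.
move=> [H1 H2] E; split.
  by move=> w /E; apply: H1.
move=> w /H2 [u [j [k [Su Hk]]]]; exists u, j, k; split => //; exact/E.
Qed.

Lemma p1eq_eq (x p : P1 R) : p1eq x p -> x = p.
Proof.
case: x => [a|]; case: p => [b|] //=; rewrite /p1eq /=.
by move=> H; congr Fin; apply/eqP; rewrite eq_le.
Qed.

Lemma p1eq_refl (p : P1 R) : p1eq p p.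
Proof. by rewrite /p1eq p1le_refl. Qed.

Lemma is_I_ends A B p q S : is_I A B p q S -> S p /\ S q.
Proof.
case=> [[<- H]|[_ [[H|H] _]]]; rewrite !H.
- by rewrite p1eq_refl.
- by rewrite arc_l arc_r.
- by rewrite arc_l arc_r.
Qed.

Lemma is_I_eq A B p S x : is_I A B p p S -> S x -> x = p.
Proof. by case=> [[_ H]|[//]]; rewrite H => /p1eq_eq. Qed.

Lemma is_I_neq A B p q S : p <> q -> is_I A B p q S ->
  ((forall x, S x = Defs.arc p q x) \/ (forall x, S x = Defs.arc q p x)) /\
  Defs.invariant A S.
Proof. by move=> pq [[E _]//|[_ [H [HA _]]]]. Qed.

End Main.

Section Parts.
Variable R : realFieldType.

Lemma part11 (A B : 'M[R]_2) (v : 'cV[R]_2) (al be : R) :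
  \det A = 1 -> \det B = 1 -> v <> 0 -> A *m v = al *: v -> B *m v = be *: v ->
  0 < al -> 0 < be ->
  (\tr B < \tr A -> complete_optimal A B (fun w => w = [:: la])) /\
  (\tr A < \tr B -> complete_optimal A B (fun w => w = [:: lb])).
Proof.
move=> dA dB vn HA HB al0 be0.
rewrite (tr_FF dA vn HA al0) (tr_FF dB vn HB be0).
have ga := GG_ge1 al0; have gb := GG_ge1 be0.
split => h.
  apply: co_ext (@opt_a R A B v al be dA dB vn HA HB al0 be0 _) _.
    by rewrite ltNge -(FF_mono ga gb) !FF_GG // -ltNge.
  by move=> w; split => [[c [/eqP -> ->]] // | ->]; exists false.
apply: co_ext (@opt_b R A B v al be dA dB vn HA HB al0 be0 _) _.
  by rewrite ltNge -(FF_mono gb ga) !FF_GG // -ltNge.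
by move=> w; split => [[c [/eqP -> ->]] // | ->]; exists true.
Qed.

Lemma part12_equal (A B : 'M[R]_2) (v : 'cV[R]_2) (al : R) :
  \det A = 1 -> \det B = 1 -> v <> 0 -> A *m v = al *: v -> B *m v = al *: v ->
  0 < al ->
  (forall w, w <> [::] -> maximal A B w) /\ complete_optimal A B lyndon.
Proof.
move=> dA dB vn HA HB al0.
have Hm := @all_max_equal R A B v al al dA dB vn HA HB al0 al0 (erefl _).
split => //; split.
  by move=> w Lw; split => //; apply: Hm; case: Lw.
move=> w [wn _]; have [u [j [k [Lu [k0 E]]]]] := lyndon_exists wn.
by exists u, j, k.
Qed.

Lemma part12_mixed (A B : 'M[R]_2) (v : 'cV[R]_2) (al be : R) :
  \det A = 1 -> \det B = 1 -> v <> 0 -> A *m v = al *: v -> B *m v = be *: v ->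
  0 < al -> 0 < be -> al * be = 1 -> al != 1 ->
  complete_optimal A B (fun w => w = [:: la] \/ w = [:: lb]).
Proof.
move=> dA dB vn HA HB al0 be0 ab a1.
apply: co_ext (@opt_mixed R A B v al be dA dB vn HA HB al0 be0 ab a1) _.
move=> w; split => [[[] [_ ->]]|[->|->]]; by [right|left|exists false|exists true].
Qed.

Lemma part2 (A B : 'M[R]_2) (v : 'cV[R]_2) (be : R) :
  \det A = 1 -> \det B = 1 -> v <> 0 -> A *m v = 1 *: v -> B *m v = be *: v ->
  0 < be -> be != 1 ->
  complete_optimal A B (fun w => w = [:: lb]).
Proof.
move=> dA dB vn HA HB be0 b1.
apply: co_ext (@opt_b R A B v 1 be dA dB vn HA HB ltr01 be0 _) _.
  by rewrite {1}/GG lexx; apply: GG_gt1.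
by move=> w; split => [[c [/eqP -> ->]] // | ->]; exists true.
Qed.

End Parts.

Theorem theorem3p5 (R : realFieldType) (A B : 'M[R]_2)
    (ap am bp bm : P1 R) (Ip Im : P1 R -> bool) :
  SL2 A -> SL2 B -> 2 <= \tr A -> 2 <= \tr B ->
  A *m B <> B *m A ->
  hyperbolic B ->
  attr_fp A ap -> rep_fp A am -> attr_fp B bp -> rep_fp B bm ->
  (* coherent orientation: I^+ and I^- exist *)
  is_Iplus A B ap bp Ip -> is_Iminus A B am bm Im ->
  (* (1) *)
  (hyperbolic A ->
   (ap = bp \/ ap = bm \/ am = bp \/ am = bm) ->
   ~ ((ap = bp /\ am = bm) \/ (ap = bm /\ am = bp)) ->
     (* (1.1) *)
     (\tr B < \tr A -> complete_optimal A B (fun w => w = [:: la])) /\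
     (\tr A < \tr B -> complete_optimal A B (fun w => w = [:: lb])) /\
     (* (1.2) *)
     (\tr A = \tr B -> (forall x, ~~ (Ip x && Im x)) ->
        (forall w, w <> [::] -> maximal A B w) /\ complete_optimal A B lyndon) /\
     (\tr A = \tr B -> (exists x, Ip x && Im x) ->
        complete_optimal A B (fun w => w = [:: la] \/ w = [:: lb])))
  /\
  (* (2) *)
  (parabolic A -> (ap = bp \/ ap = bm) ->
     complete_optimal A B (fun w => w = [:: lb])).
Proof.
move=> sA sB tA tB _ hB attrA repA attrB repB HIp HIm.
have dA : \det A = 1 := sA. have dB : \det B = 1 := sB.
have [vbp [lbp [vbpn HBp lbp1 Ebp]]] := attr_hyp sB hB attrB.
have [vbm [lbm [vbmn HBm lbm0 lbm1 Ebm]]] := rep_hyp sB hB repB.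
have lbp0 : 0 < lbp by apply: lt_trans lbp1.
have trBp := tr_FF dB vbpn HBp lbp0.
have trBm := tr_FF dB vbmn HBm lbm0.
have lbpm : lbp != lbm by rewrite gt_eqF // (lt_trans lbm1 lbp1).
split.
  move=> hA Hsh Hnot.
  have [vap [lap [vapn HAp lap1 Eap]]] := attr_hyp sA hA attrA.
  have [vam [lam [vamn HAm lam0 lam1 Eam]]] := rep_hyp sA hA repA.
  have lap0 : 0 < lap by apply: lt_trans lap1.
  have trAp := tr_FF dA vapn HAp lap0.
  have trAm := tr_FF dA vamn HAm lam0.
  have lapm : lap != lam by rewrite gt_eqF // (lt_trans lam1 lap1).
  have [Ipa Ipb] := is_I_ends HIp.
  have [Ima Imb] := is_I_ends HIm.
  have ilam1 : 1 < lam^-1 by rewrite invf_gt1.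
  have ilbm1 : 1 < lbm^-1 by rewrite invf_gt1.
  case: Hsh => [E|[E|[E|E]]].
  -
    have HBv : B *m vap = lbp *: vap.
      by apply: (common vapn vbpn _ HAp HBp); rewrite -Eap -Ebp.
    have [P1 P2] := part11 dA dB vapn HAp HBv lap0 lbp0.
    split => //; split => //; split.
      move=> Htr _.
      have El : lap = lbp by apply: FF_inj1; rewrite ?ltW // -trAp -trBp.
      by rewrite -El in HBv; apply: (part12_equal dA dB vapn HAp HBv lap0).
    move=> Htr [x /andP [Ipx Imx]]; exfalso.
    have HIp' := HIp; rewrite /is_Iplus -E in HIp'.
    have xa := is_I_eq HIp' Ipx.
    have amn : am <> bm by move=> E2; apply: Hnot; left.
    have [Harc Hinv] := is_I_neq amn HIm.
    rewrite Eam Ebm in Harc.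
    apply: (@geo_key R (invmx A) vap vam vbm lap^-1 lam^-1 Im vapn vamn vbmn).
    + by apply: eig_inv; rewrite // gt_eqF.
    + by apply: eig_inv; rewrite // gt_eqF.
    + by rewrite invr_gt0.
    + by apply: lt_trans ilam1; rewrite invf_lt1.
    + exact: (D2_neq_eig vapn vamn HAp HAm lapm).
    + by apply: D2_neq_proj => //; rewrite -Eam -Ebm => /esym.
    + exact: (D2_neq_eig vapn vbmn HBv HBm lbpm).
    + exact: Harc.
    + exact: Hinv.
    + by rewrite -Eap -xa.
  -
    have HBv : B *m vap = lbm *: vap.
      by apply: (common vapn vbmn _ HAp HBm); rewrite -Eap -Ebm.
    have [P1 P2] := part11 dA dB vapn HAp HBv lap0 lbm0.
    split => //; split => //; split.
      move=> _ Hd; exfalso; have := Hd ap; rewrite Ipa /= E Imb //.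
    move=> Htr _.
    have El : lap = lbm^-1.
      by apply: FF_inj1; rewrite ?ltW // FF_inv -trAp -trBm.
    apply: (part12_mixed dA dB vapn HAp HBv lap0 lbm0).
      by rewrite El mulVf // gt_eqF.
    by rewrite gt_eqF.
  -
    have HBv : B *m vam = lbp *: vam.
      by apply: (common vamn vbpn _ HAm HBp); rewrite -Eam -Ebp.
    have [P1 P2] := part11 dA dB vamn HAm HBv lam0 lbp0.
    split => //; split => //; split.
      move=> _ Hd; exfalso; have := Hd am; rewrite Ima andbT E Ipb //.
    move=> Htr _.
    have El : lam^-1 = lbp.
      by apply: FF_inj1; rewrite ?ltW // FF_inv -trAm -trBp.
    apply: (part12_mixed dA dB vamn HAm HBv lam0 lbp0).
      by rewrite -El divff // gt_eqF.
    by rewrite lt_eqF.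
  -
    have HBv : B *m vam = lbm *: vam.
      by apply: (common vamn vbmn _ HAm HBm); rewrite -Eam -Ebm.
    have [P1 P2] := part11 dA dB vamn HAm HBv lam0 lbm0.
    split => //; split => //; split.
      move=> Htr _.
      have El : lam = lbm.
        apply: invr_inj; apply: FF_inj1; rewrite ?ltW //.
        by rewrite !FF_inv -trAm -trBm.
      by rewrite -El in HBv; apply: (part12_equal dA dB vamn HAm HBv lam0).
    move=> Htr [x /andP [Ipx Imx]]; exfalso.
    have HIm' := HIm; rewrite /is_Iminus -E in HIm'.
    have xa := is_I_eq HIm' Imx.
    have apn : ap <> bp by move=> E2; apply: Hnot; left.
    have [Harc Hinv] := is_I_neq apn HIp.
    rewrite Eap Ebp in Harc.
    apply: (@geo_key R A vam vap vbp lam lap Ip vamn vapn vbpn HAm HAp lam0).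
    + exact: lt_trans lam1 lap1.
    + exact: (D2_neq_eig vamn vapn HAm HAp (negbT (lt_eqF (lt_trans lam1 lap1)))).
    + by apply: D2_neq_proj => //; rewrite -Eap -Ebp => /esym.
    + exact: (D2_neq_eig vamn vbpn HBv HBp (negbT (lt_eqF (lt_trans lbm1 lbp1)))).
    + exact: Harc.
    + exact: Hinv.
    + by rewrite -Eam -xa.
move=> [trA2 _] Hsh.
have [v [l [vn [HAv [_ Eap]]]]] := attrA.
have l1 : l = 1.
  have := eig_tr dA vn HAv; rewrite trA2 => H.
  have : (l - 1) ^+ 2 = 0.
    by rewrite (_ : (l - 1) ^+ 2 = l ^+ 2 + 1 - l * 2); [lra | ring].
  by move/eqP; rewrite sqrf_eq0 subr_eq0 => /eqP.
rewrite l1 in HAv.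
case: Hsh => E.
  have HBv : B *m v = lbp *: v.
    by apply: (common vn vbpn _ HAv HBp); rewrite -Eap -Ebp.
  by apply: (part2 dA dB vn HAv HBv lbp0); rewrite gt_eqF.
have HBv : B *m v = lbm *: v.
  by apply: (common vn vbmn _ HAv HBm); rewrite -Eap -Ebm.
by apply: (part2 dA dB vn HAv HBv lbm0); rewrite lt_eqF.
Qed.
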